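(* Let $(\mathcal{M},\mathrm{dist})$ be a metric space, $\mathcal{F}\subset2^{\mathcal{M}}$, and $J_\beta:\mathcal{M}\to\mathbb{R}\cup\{+\infty\}$, $0<\beta<+\infty$, lower semi-continuous functionals with $J_{\beta_1}\le J_{\beta_2}$ on $\mathcal{M}$ whenever $0<\beta_1\le\beta_2<+\infty$. Let $J_\infty=\sup_{\beta>0}J_\beta$ and $c_\beta=\inf_{A\in\mathcal{F}}\sup_AJ_\beta$ for $0<\beta\le+\infty$, and assume $c_\beta\in\mathbb{R}$ for all $0<\beta\le+\infty$. Assume (F2'): for every sequence $(A_n)\subset\mathcal{F}$ such that, for some $\beta$, $A_n\subset\mathcal{M}^{c_\infty+1}_\beta$ for all $n$, one has $\limsup_nA_n\in\mathcal{F}$. Then (1) for every $0<\beta<+\infty$ there is an optimal set for $J_\beta$ at $c_\beta$; (2) $c_\beta\to c_\infty$ as $\beta\to+\infty$; (3) if $\beta_n\to+\infty$ and $A_n\in\mathcal{F}$ is optimal for $J_{\beta_n}$ at $c_{\beta_n}$, then $\limsup_nA_n$ is optimal for $J_\infty$ at $c_\infty$.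
   Context: $\mathcal{M}^{c'}_\beta=\{x\in\mathcal{M}:J_\beta(x)\le c'\}$. A set $A$ is optimal for $J$ at $c$ if $A\in\mathcal{F}$ and $\sup_AJ=c$. For sets $A_n\subset\mathcal{M}$, $\limsup_nA_n$ is the set of $x$ such that for some $n_j\to\infty$ there are $x_{n_j}\in A_{n_j}$ with $x_{n_j}\to x$. *)

(* Defs.v *)
From HB Require Import structures.
From mathcomp Require Import all_boot all_order all_algebra.
From mathcomp Require Import all_classical all_reals all_analysis.
Set Implicit Arguments. Unset Strict Implicit. Unset Printing Implicit Defensive.
Import Order.TTheory GRing.Theory Num.Theory.
Local Open Scope classical_set_scope.
Local Open Scope ring_scope.
Local Open Scope ereal_scope.

Section defs.
Context {R : realType} {M : topologicalType}.

Definition supOn (J : M -> \bar R) (A : set M) : \bar R := ereal_sup (J @` A).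

Definition minimax (F : set (set M)) (J : M -> \bar R) : \bar R :=
  ereal_inf [set supOn J A | A in F].

Definition optimal (F : set (set M)) (J : M -> \bar R) (c : \bar R) (A : set M) :=
  F A /\ supOn J A = c.

Definition sublevel (J : M -> \bar R) (c' : \bar R) : set M := [set x | J x <= c'].

Definition Jsup (J : R -> M -> \bar R) (x : M) : \bar R :=
  ereal_sup [set J b x | b in [set b : R | (0 < b)%R]].

(* limsup_n A_n: points x such that for some n_j -> oo there are
   x_{n_j} in A_{n_j} with x_{n_j} -> x *)
Definition setlimsup (A : nat -> set M) : set M :=
  [set x | exists (phi : nat -> nat) (u : nat -> M),
     (forall N : nat, exists j0 : nat, forall j : nat, (j0 <= j)%N -> (N <= phi j)%N) /\
     (forall j, A (phi j) (u j)) /\ u @ \oo --> x].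
End defs.

(* Main.v *)
Require Import Defs.
From HB Require Import structures.
From mathcomp Require Import all_boot all_order all_algebra.
From mathcomp Require Import all_classical all_reals all_analysis.
Import Order.TTheory GRing.Theory Num.Theory.
Local Open Scope classical_set_scope.
Local Open Scope ring_scope.
From mathcomp Require Import lra.

Lemma LS (R:realType)(M:metricType R)(f : M -> \bar R)(A : nat -> set M)(K : \bar R) :
  lower_semicontinuous f -> K \is a fin_num ->
  (forall e, (0<e)%R -> exists N, forall n y, (N <= n)%N -> A n y -> (f y <= K + e%:E)%E) ->
  forall x, setlimsup A x -> (f x <= K)%E.
Proof.
move=> lsc Kf H x [phi [u [Hphi [Au ux]]]].
apply/lee_addgt0Pr => e e0.
rewrite leNgt; apply/negP => Kex.
have [N HN] := H e e0.
have [j0 Hj0] := Hphi N.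
move: Kex; rewrite -(fineK Kf) -EFinD => /lsc [V Vx HV].
have := ux _ Vx.
case => j1 _ Hj1.
have := HV (u (maxn j0 j1)) (Hj1 (maxn j0 j1) (leq_maxr _ _)).
have := HN _ _ (Hj0 (maxn j0 j1) (leq_maxl _ _)) (Au (maxn j0 j1)).
rewrite -{1}(fineK Kf) -EFinD => h1 h2.
by move: (lt_le_trans h2 h1); rewrite ltxx.
Qed.

Section H.
Context {R : realType} {M : metricType R}.
Local Open Scope ereal_scope.

Lemma supOn_ub {J: M -> \bar R} {A : set M} {y} : A y -> J y <= supOn J A.
Proof. by move=> Ay; apply: ereal_sup_ubound; exists y. Qed.

Lemma supOn_le (J: M -> \bar R) (A : set M) K :
  (forall y, A y -> J y <= K) -> supOn J A <= K.
Proof. by move=> H; apply: ge_ereal_sup => _ [y Ay <-]; apply: H. Qed.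

Lemma mm_lb {F : set (set M)} {J : M -> \bar R} {A} : F A -> minimax F J <= supOn J A.
Proof. by move=> FA; apply: ereal_inf_lbound; exists A. Qed.

Lemma mm_le (F : set (set M)) (J1 J2 : M -> \bar R) :
  (forall x, J1 x <= J2 x) -> minimax F J1 <= minimax F J2.
Proof.
move=> H; apply: le_ereal_inf_tmp => _ [A FA <-].
apply: le_trans (mm_lb FA) _.
by apply: supOn_le => y Ay; apply: le_trans (H y) (supOn_ub Ay).
Qed.

Lemma Jsup_ge (J : R -> M -> \bar R) b x : (0 < b)%R -> J b x <= Jsup J x.
Proof. by move=> b0; apply: ereal_sup_ubound; exists b. Qed.

Lemma Jsup_le (J : R -> M -> \bar R) x K :
  (forall b, (0 < b)%R -> J b x <= K) -> Jsup J x <= K.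
Proof. by move=> H; apply: ge_ereal_sup => _ [b b0 <-]; apply: H. Qed.

Lemma lowb (bs : nat -> R) : (forall n, (0 < bs n)%R) ->
  (forall b, exists N, forall n, (N <= n)%N -> (b <= bs n)%R) ->
  exists b0, (0 < b0)%R /\ forall n, (b0 <= bs n)%R.
Proof.
move=> pos H; have [N HN] := H 1%R.
have : forall m, exists b, (0 < b)%R /\ forall n, (n < m)%N -> (b <= bs n)%R.
  elim=> [|m [b [b0 Hb]]]; first by exists 1%R.
  exists (Order.min b (bs m)); split; first by rewrite lt_min b0 pos.
  move=> n; rewrite ltnS leq_eqVlt => /orP [/eqP ->|nm].
    by rewrite ge_min lexx orbT.
  by rewrite ge_min Hb.
case/(_ N) => b [b0 Hb]; exists (Order.min b 1%R); split.
  by rewrite lt_min b0 ltr01.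
move=> n; case: (ltnP n N) => nN; first by rewrite ge_min Hb.
by rewrite ge_min (HN n nN) orbT.
Qed.

Lemma key (F : set (set M)) (J : R -> M -> \bar R)
  (Jlsc : forall b, (0 < b)%R -> lower_semicontinuous (J b))
  (Jmono : forall b1 b2 x, (0 < b1)%R -> (b1 <= b2)%R -> (J b1 x <= J b2 x)%E)
  (F2' : forall A : nat -> set M, (forall n, F (A n)) ->
     (exists b, (0 < b)%R /\ forall n, A n `<=` sublevel (J b) (minimax F (Jsup J) + 1)%E) ->
     F (setlimsup A))
  (bs : nat -> R) (A : nat -> set M) K :
  (forall n, (0 < bs n)%R) -> (forall b, exists N, forall n, (N <= n)%N -> (b <= bs n)%R) ->
  (forall n, F (A n)) -> K \is a fin_num -> K <= minimax F (Jsup J) ->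
  (forall n, supOn (J (bs n)) (A n) <= K) ->
  F (setlimsup A) /\ supOn (Jsup J) (setlimsup A) <= K.
Proof.
move=> pos Hdiv FA Kf Kc HA.
have [b0 [b00 Hb0]] := lowb bs pos Hdiv.
split.
  apply: F2' => //; exists b0; split=> // n y Ay; rewrite /sublevel/=.
  apply: le_trans (Jmono b0 (bs n) y b00 (Hb0 n)) _.
  apply: le_trans (supOn_ub Ay) _; apply: le_trans (HA n) _.
  by apply: le_trans Kc _; apply: leeDl; exact: lee01.
apply: supOn_le => x Hx; apply: Jsup_le => b bpos.
apply: (@LS _ _ _ _ _ (Jlsc b bpos) Kf _ x Hx) => e e0.
have [N HN] := Hdiv b; exists N => n y Nn Ay.
apply: le_trans (Jmono b (bs n) y bpos (HN n Nn)) _.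
apply: le_trans (supOn_ub Ay) _; apply: le_trans (HA n) _.
by apply: leeDl; rewrite lee_fin ltW.
Qed.
End H.

Theorem theorem2p7 (R : realType) (M : metricType R) (F : set (set M))
  (J : R -> M -> \bar R)
  (Jnoninf : forall b x, 0 < b -> J b x != -oo%E)
  (Jlsc : forall b, 0 < b -> lower_semicontinuous (J b))
  (Jmono : forall b1 b2 x, 0 < b1 -> b1 <= b2 -> (J b1 x <= J b2 x)%E)
  (cfin : forall b, 0 < b -> minimax F (J b) \is a fin_num)
  (cinffin : minimax F (Jsup J) \is a fin_num)
  (F2' : forall A : nat -> set M, (forall n, F (A n)) ->
     (exists b, 0 < b /\ forall n, A n `<=` sublevel (J b) (minimax F (Jsup J) + 1)%E) ->
     F (setlimsup A)) :
  (forall b, 0 < b -> exists A, optimal F (J b) (minimax F (J b)) A) /\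
  ((fun b => minimax F (J b)) @ +oo --> minimax F (Jsup J)) /\
  (forall (bs : nat -> R) (A : nat -> set M), (forall n, 0 < bs n) ->
     bs @ \oo --> +oo ->
     (forall n, optimal F (J (bs n)) (minimax F (J (bs n))) (A n)) ->
     optimal F (Jsup J) (minimax F (Jsup J)) (setlimsup A)).
Proof.
have cle : forall b, 0 < b -> (minimax F (J b) <= minimax F (Jsup J))%E.
  by move=> b b0; apply: mm_le => x; apply: Jsup_ge.
have P1 : forall b, 0 < b -> exists A, optimal F (J b) (minimax F (J b)) A.
  move=> b b0; have cf := cfin b b0.
  have : forall n : nat, exists A, F A /\
      (supOn (J b) A <= minimax F (J b) + ((n.+1%:R)^-1)%:E)%E.
    move=> n.
    have [_ [A FA <-] lt] := @lb_ereal_inf_adherent R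
       [set supOn (J b) A | A in F] ((n.+1%:R)^-1) (ltac:(by rewrite invr_gt0 ltr0Sn)) cf.
    by exists A; split => //; apply: ltW.
  case/choice => As HAs.
  have FL : F (setlimsup As).
    apply: F2' => [n|]; first by case: (HAs n).
    exists b; split => // n y Ay; rewrite /sublevel /=.
    apply: le_trans (supOn_ub Ay) _; apply: le_trans (proj2 (HAs n)) _.
    apply: leeD; first exact: cle.
    by rewrite lee_fin invf_le1 // ler1n.
  exists (setlimsup As); split => //.
  apply/le_anti/andP; split; last exact: mm_lb.
  apply: supOn_le => x Hx.
  apply: (@LS _ _ _ _ _ (Jlsc b b0) cf _ x Hx) => e e0.
  have [N _ HN] := near_infty_natSinv_lt (PosNum e0).
  exists N => n y Nn Ay.
  apply: (le_trans (supOn_ub Ay)); apply: (le_trans (proj2 (HAs n))).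
  apply: leeD => //.
  by rewrite lee_fin ltW //; apply: HN.
split => //; split; last first.
  move=> bs A pos bsc Aopt.
  have Hdiv : forall b, exists N, forall n, (N <= n)%N -> b <= bs n.
    by move=> b; move/cvgryPge: bsc => /(_ b) [N _ HN]; exists N => n /HN.
  have [FL HL] := key F J Jlsc Jmono F2' bs A _ pos Hdiv (fun n => proj1 (Aopt n))
     cinffin (lexx _) (fun n => (ltac:(by rewrite (proj2 (Aopt n)); exact: cle))).
  split => //; apply/le_anti/andP; split => //; exact: mm_lb.
rewrite -(fineK cinffin); apply/fine_cvgP; split.
  by exists 0; split; [exact: real0 | move=> b b0; exact: cfin].
apply/cvgrPdist_lt => e e0.
have [b1 [b10 Hb1]] : exists b1, 0 < b1 /\
    (minimax F (Jsup J) - e%:E < minimax F (J b1))%E.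
  case: (pselect (exists b1, 0 < b1 /\
    (minimax F (Jsup J) - e%:E < minimax F (J b1))%E)) => // Hno.
  exfalso.
  have Hall : forall b, 0 < b -> (minimax F (J b) <= minimax F (Jsup J) - e%:E)%E.
    by move=> b b0; rewrite leNgt; apply/negP => h; apply: Hno; exists b.
  have : forall n : nat, exists A, optimal F (J (n%:R + 1)) (minimax F (J (n%:R + 1))) A.
    by move=> n; apply: P1; rewrite ltr_wpDl.
  case/choice => As HAs.
  have pos : forall n : nat, 0 < (n%:R + 1 : R) by move=> n; rewrite ltr_wpDl.
  have Hdiv : forall b, exists N, forall n, (N <= n)%N -> b <= (n%:R + 1 : R).
    move=> b; move/cvgryPge: (@cvgr_idn R) => /(_ b) [N _ HN]; exists N => n /HN /=.
    by move=> h; apply: le_trans h _; rewrite lerDl.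
  have Kf : (minimax F (Jsup J) - e%:E)%E \is a fin_num by rewrite fin_numB cinffin.
  have Kc : (minimax F (Jsup J) - e%:E <= minimax F (Jsup J))%E.
    by rewrite leeBlDr // leeDl // lee_fin ltW.
  have [FL HL] := key F J Jlsc Jmono F2' (fun n : nat => n%:R + 1) As _ pos Hdiv
     (fun n => proj1 (HAs n)) Kf Kc
     (fun n => ltac:(by rewrite (proj2 (HAs n)); apply: Hall)).
  have := le_trans (mm_lb FL) HL.
  rewrite -(fineK cinffin) -EFinB lee_fin; lra.
exists b1; split; first exact: num_real.
move=> t /= tb1.
have t0 : 0 < t by apply: lt_trans tb1.
have c1 : (minimax F (J b1) <= minimax F (J t))%E.
  by apply: mm_le => x; apply: Jmono => //; apply: ltW.
have c2 := cle t t0.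
move: Hb1 c1 c2; rewrite -(fineK cinffin) -(fineK (cfin _ t0)) -(fineK (cfin _ b10)).
rewrite -EFinB !lte_fin !lee_fin => h1 h2 h3.
rewrite ger0_norm; last by rewrite subr_ge0.
lra.
Qed.
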